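(* Let $X$ be a Minkowski space whose closed unit ball $B$ is a polytope, and let $f$ be the largest number of facets (faces of codimension one within the face itself) that a proper face of $B$ can have. Then $m(X)\geq f$.
   Context: A Minkowski space is a finite-dimensional real normed space $(X,\|\cdot\|)$. For a set $S\subseteq X$, its midpoint set is $M(S)=\{\tfrac12(x+y): x,y\in S,\ x\neq y\}$. A set $S\subseteq X$ is an M-set if every vector in $M(S)$ has norm exactly $1$ and every vector in $S$ has norm strictly greater than $1$. $m(X)$ denotes the largest cardinality of an M-set in $X$ if such a largest finite cardinality exists, and $m(X)=\infty$ otherwise. *)

(* Defs.v *)
From Stdlib Require Import Reals List ZArith.
From Stdlib Require Fin.
Import ListNotations.
Open Scope R_scope.

(** The space R^n: vectors are functions Fin.t n -> R, with pointwise operations.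
    Every Minkowski space (finite-dim. real normed space) is isomorphic to some
    (R^n, N) with N a norm. *)
Definition Vec (n : nat) : Type := Fin.t n -> R.

Definition vzero {n} : Vec n := fun _ => 0.
Definition vadd {n} (x y : Vec n) : Vec n := fun i => x i + y i.
Definition vscale {n} (c : R) (x : Vec n) : Vec n := fun i => c * x i.

Definition lincomb {n} (cs : list R) (vs : list (Vec n)) : Vec n :=
  fold_right (fun p acc => vadd (vscale (fst p) (snd p)) acc) vzero (combine cs vs).

Definition sumR (cs : list R) : R := fold_right Rplus 0 cs.

Definition is_norm {n} (N : Vec n -> R) : Prop :=
  (forall x, 0 <= N x) /\
  (forall x, N x = 0 -> x = vzero) /\
  (forall c x, N (vscale c x) = Rabs c * N x) /\
  (forall x y, N (vadd x y) <= N x + N y).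

Definition vset (n : nat) := Vec n -> Prop.
Definition same_set {n} (A B : vset n) : Prop := forall x, A x <-> B x.

Definition unit_ball {n} (N : Vec n -> R) : vset n := fun x => N x <= 1.

Definition conv {n} (l : list (Vec n)) : vset n := fun x =>
  exists lam : list R, length lam = length l /\ Forall (fun c => 0 <= c) lam /\
    sumR lam = 1 /\ x = lincomb lam l.

Definition is_polytope {n} (P : vset n) : Prop :=
  exists l : list (Vec n), same_set P (conv l).

Definition linear_functional {n} (phi : Vec n -> R) : Prop :=
  (forall x y, phi (vadd x y) = phi x + phi y) /\
  (forall c x, phi (vscale c x) = c * phi x).

(** F is a face of the polytope P: F = P ∩ {phi = c} where phi <= c on P
    (phi = 0, c = 0 gives P itself; phi = 0, c = 1 gives the empty face). *)
Definition face_of {n} (P F : vset n) : Prop :=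
  exists (phi : Vec n -> R) (c : R), linear_functional phi /\
    (forall y, P y -> phi y <= c) /\
    same_set F (fun x => P x /\ phi x = c).

Definition proper_face_of {n} (P F : vset n) : Prop :=
  face_of P F /\ ~ same_set F P.

Definition aff_indep {n} (l : list (Vec n)) : Prop :=
  forall cs : list R, length cs = length l -> sumR cs = 0 ->
    lincomb cs l = vzero -> Forall (fun c => c = 0) cs.

Definition has_aff_indep {n} (S : vset n) (k : nat) : Prop :=
  exists l : list (Vec n), length l = k /\ NoDup l /\ Forall S l /\ aff_indep l.

(** Affine dimension of S is d (d = -1 for the empty set). *)
Definition aff_dim {n} (S : vset n) (d : Z) : Prop :=
  exists k : nat, d = (Z.of_nat k - 1)%Z /\ has_aff_indep S k /\ ~ has_aff_indep S (Datatypes.S k).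

Definition facet_of {n} (F G : vset n) : Prop :=
  face_of F G /\ exists d : Z, aff_dim F d /\ aff_dim G (d - 1)%Z.

Definition family_card {n} (Q : vset n -> Prop) (k : nat) : Prop :=
  exists l : list (vset n), length l = k /\ Forall Q l /\
    (forall i j, (i < k)%nat -> (j < k)%nat -> i <> j ->
        ~ same_set (nth i l (fun _ => False)) (nth j l (fun _ => False))) /\
    (forall A, Q A -> exists B, In B l /\ same_set A B).

Definition num_facets {n} (F : vset n) (k : nat) : Prop := family_card (facet_of F) k.

Definition max_facets_proper_face {n} (P : vset n) (f : nat) : Prop :=
  (exists F, proper_face_of P F /\ num_facets F f) /\
  (forall F k, proper_face_of P F -> num_facets F k -> (k <= f)%nat).

Definition midpoint {n} (x y : Vec n) : Vec n := vscale (1/2) (vadd x y).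

Definition M_set {n} (N : Vec n -> R) (S : vset n) : Prop :=
  (forall x y, S x -> S y -> x <> y -> N (midpoint x y) = 1) /\
  (forall x, S x -> N x > 1).

Definition set_card {n} (S : vset n) (k : nat) : Prop :=
  exists l : list (Vec n), NoDup l /\ length l = k /\ forall x, S x <-> In x l.

Definition is_max_Mset_card {n} (N : Vec n -> R) (k : nat) : Prop :=
  (exists S, M_set N S /\ set_card S k) /\
  (forall S, M_set N S -> exists l : list (Vec n), (length l <= k)%nat /\ forall x, S x -> In x l).

(** m(X) as an extended natural: Some k if the largest cardinality k exists, None = infinity. *)
Definition m_value {n} (N : Vec n -> R) (v : option nat) : Prop :=
  match v with
  | Some k => is_max_Mset_card N k
  | None => ~ exists k, is_max_Mset_card N k
  end.

Definition enat_ge (v : option nat) (f : nat) : Prop :=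
  match v with Some k => (f <= k)%nat | None => True end.

(* Main.v *)
Require Import Defs.
From Stdlib Require Import Reals List ZArith Lra Lia Arith.
From Stdlib Require Import Classical FunctionalExtensionality ClassicalEpsilon.
Import ListNotations.
Open Scope R_scope.

Fixpoint sm (m : nat) (g : nat -> R) : R :=
  match m with O => 0 | S m' => sm m' g + g m' end.

Lemma sm_ext m g h : (forall t, (t < m)%nat -> g t = h t) -> sm m g = sm m h.
Proof.
  induction m; simpl; intros H; auto.
  rewrite IHm by (intros; apply H; lia). rewrite H by lia. reflexivity.
Qed.

Lemma sm_shift m g : sm (S m) g = g O + sm m (fun t => g (S t)).
Proof.
  induction m.
  - simpl; ring.
  - change (sm (S (S m)) g) with (sm (S m) g + g (S m)). rewrite IHm. simpl. ring.
Qed.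

Lemma sm_add m g h : sm m (fun t => g t + h t) = sm m g + sm m h.
Proof. induction m; simpl; [ring|rewrite IHm; ring]. Qed.

Lemma sm_scale m a g : sm m (fun t => a * g t) = a * sm m g.
Proof. induction m; simpl; [ring|rewrite IHm; ring]. Qed.

Lemma sm_scale_r m a g : sm m (fun t => g t * a) = sm m g * a.
Proof. induction m; simpl; [ring|rewrite IHm; ring]. Qed.

Lemma sm_const m a : sm m (fun _ => a) = INR m * a.
Proof. induction m; simpl sm; [simpl; ring|rewrite IHm, S_INR; ring]. Qed.

Lemma sm_zero m : sm m (fun _ => 0) = 0.
Proof. rewrite sm_const; ring. Qed.

Lemma sm_le m g h : (forall t, (t < m)%nat -> g t <= h t) -> sm m g <= sm m h.
Proof.
  induction m; simpl; intros H; [lra|].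
  assert (sm m g <= sm m h) by (apply IHm; intros; apply H; lia).
  assert (g m <= h m) by (apply H; lia). lra.
Qed.

Lemma sm_lt m g h t0 : (forall t, (t < m)%nat -> g t <= h t) -> (t0 < m)%nat -> g t0 < h t0 ->
  sm m g < sm m h.
Proof.
  induction m; simpl; intros H Ht Hlt; [lia|].
  destruct (Nat.eq_dec t0 m) as [->|Hne].
  - assert (sm m g <= sm m h) by (apply sm_le; intros; apply H; lia). lra.
  - assert (sm m g < sm m h) by (apply IHm; [intros; apply H; lia|lia|auto]).
    assert (g m <= h m) by (apply H; lia). lra.
Qed.

Lemma sm_split a b g : sm (a + b) g = sm a g + sm b (fun t => g (a + t)%nat).
Proof.
  induction b.
  - rewrite Nat.add_0_r. simpl. ring.
  - rewrite Nat.add_succ_r. simpl. rewrite IHb. ring.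
Qed.

Lemma sm_ind m t0 v : (t0 < m)%nat -> sm m (fun t => if Nat.eq_dec t t0 then v else 0) = v.
Proof.
  induction m; intros H; [lia|]. simpl.
  destruct (Nat.eq_dec m t0) as [->|Hne].
  - rewrite (sm_ext _ _ (fun _ => 0)). rewrite sm_zero; ring.
    intros t Ht. destruct (Nat.eq_dec t t0); [lia|auto].
  - rewrite IHm by lia. ring.
Qed.

Lemma sm_elem_le m g t0 : (t0 < m)%nat -> (forall t, (t < m)%nat -> 0 <= g t) -> g t0 <= sm m g.
Proof.
  induction m; intros H Hp; [lia|]. simpl.
  assert (0 <= sm m g) by (rewrite <- (sm_zero m); apply sm_le; intros; apply Hp; lia).
  destruct (Nat.eq_dec t0 m) as [->|Hne].
  - lra.
  - assert (g t0 <= sm m g) by (apply IHm; [lia|intros; apply Hp; lia]).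
    assert (0 <= g m) by (apply Hp; lia). lra.
Qed.

Definition lc {n} (m : nat) (w : nat -> R) (P : nat -> Vec n) : Vec n :=
  fun o => sm m (fun t => w t * P t o).

Lemma lc_S {n} m w (P : nat -> Vec n) : lc (S m) w P = vadd (lc m w P) (vscale (w m) (P m)).
Proof. reflexivity. Qed.

Lemma lc_ext {n} m w w' (P P' : nat -> Vec n) :
  (forall t, (t < m)%nat -> w t = w' t) -> (forall t, (t < m)%nat -> P t = P' t) ->
  lc m w P = lc m w' P'.
Proof.
  intros H1 H2. apply functional_extensionality; intro o. unfold lc.
  apply sm_ext. intros t Ht. rewrite H1, H2 by auto. reflexivity.
Qed.

Lemma lf_zero {n} (psi : Vec n -> R) : linear_functional psi -> psi vzero = 0.
Proof.
  intros [Ha Hs]. replace (@vzero n) with (vscale 0 (@vzero n)).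
  - rewrite Hs; ring.
  - apply functional_extensionality; intro; unfold vscale, vzero; ring.
Qed.

Lemma lc_0 {n} w (P : nat -> Vec n) : lc 0 w P = vzero.
Proof. apply functional_extensionality; intro; reflexivity. Qed.

Lemma lf_lc {n} psi m w (P : nat -> Vec n) : linear_functional psi ->
  psi (lc m w P) = sm m (fun t => w t * psi (P t)).
Proof.
  intros Hl. induction m.
  - rewrite lc_0. apply lf_zero; auto.
  - rewrite lc_S. destruct Hl as [Ha Hs]. rewrite Ha, Hs, IHm. reflexivity.
Qed.

Lemma norm_zero {n} (N : Vec n -> R) : is_norm N -> N vzero = 0.
Proof.
  intros (H1 & H2 & H3 & H4). replace (@vzero n) with (vscale 0 (@vzero n)).
  - rewrite H3, Rabs_R0; ring.
  - apply functional_extensionality; intro; unfold vscale, vzero; ring.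
Qed.

Lemma norm_lc {n} N m w (P : nat -> Vec n) : is_norm N ->
  N (lc m w P) <= sm m (fun t => Rabs (w t) * N (P t)).
Proof.
  intros HN. induction m.
  - rewrite lc_0, norm_zero by auto. simpl; lra.
  - rewrite lc_S. destruct HN as (H1 & H2 & H3 & H4).
    eapply Rle_trans; [apply H4|]. rewrite H3. simpl. lra.
Qed.

Lemma conv_ball {n} N m w (P : nat -> Vec n) : is_norm N ->
  (forall t, (t < m)%nat -> 0 <= w t) -> (forall t, (t < m)%nat -> N (P t) <= 1) ->
  sm m w = 1 -> N (lc m w P) <= 1.
Proof.
  intros HN Hw HP Hs. eapply Rle_trans; [apply norm_lc; auto|].
  rewrite <- Hs. apply sm_le. intros t Ht.
  rewrite Rabs_pos_eq by auto.
  assert (0 <= w t) by auto. assert (N (P t) <= 1) by auto. nra.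
Qed.


Lemma lincomb_lc {n} (L : list (Vec n)) : forall cs, length cs = length L ->
  lincomb cs L = lc (length L) (fun t => nth t cs 0) (fun t => nth t L vzero).
Proof.
  induction L as [|y L IH]; intros [|c cs] H; simpl in H; try discriminate.
  - apply functional_extensionality; intro; reflexivity.
  - injection H as H.
    change (lincomb (c::cs) (y::L)) with (vadd (vscale c y) (lincomb cs L)).
    rewrite IH by exact H. apply functional_extensionality; intro o.
    unfold lc, vadd, vscale. simpl length. rewrite sm_shift. simpl. reflexivity.
Qed.

Lemma sumR_sm cs : sumR cs = sm (length cs) (fun t => nth t cs 0).
Proof.
  induction cs as [|c cs IH]; [reflexivity|].
  simpl length. rewrite sm_shift. simpl. rewrite IH. reflexivity.
Qed.

Lemma nth_map_seq {A} (w : nat -> A) m t d : (t < m)%nat -> nth t (map w (seq 0 m)) d = w t.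
Proof.
  intros H. rewrite nth_indep with (d' := w O) by (rewrite length_map, length_seq; lia).
  rewrite map_nth, seq_nth by lia. reflexivity.
Qed.

Definition AI {n} m (P : nat -> Vec n) : Prop :=
  forall w, sm m w = 0 -> lc m w P = vzero -> forall t, (t < m)%nat -> w t = 0.

Definition inj_on {n} m (P : nat -> Vec n) : Prop :=
  forall a b, (a < m)%nat -> (b < m)%nat -> P a = P b -> a = b.

Definition HAS {n} (A : vset n) (m : nat) : Prop :=
  exists P : nat -> Vec n, inj_on m P /\ (forall t, (t < m)%nat -> A (P t)) /\ AI m P.

Lemma has_HAS {n} (A : vset n) m : has_aff_indep A m <-> HAS A m.
Proof.
  split.
  - intros [l [Hlen [Hnd [Hall Hai]]]]. exists (fun t => nth t l vzero). split; [|split].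
    + intros a b Ha Hb Heq. apply (proj1 (NoDup_nth l vzero) Hnd); auto; lia.
    + intros t Ht. rewrite Forall_forall in Hall. apply Hall. apply nth_In. lia.
    + intros w Hw Hlc t Ht.
      set (cs := map w (seq 0 m)).
      assert (Hc : forall t, (t < m)%nat -> nth t cs 0 = w t) by (intros; apply nth_map_seq; auto).
      assert (Hcl : length cs = length l) by (unfold cs; rewrite length_map, length_seq; auto).
      assert (HF : Forall (fun c => c = 0) cs).
      { apply Hai; auto.
        - rewrite sumR_sm. rewrite Hcl, Hlen. transitivity (sm m w); [apply sm_ext; auto|exact Hw].
        - rewrite lincomb_lc by auto. rewrite Hlen. transitivity (lc m w (fun t => nth t l vzero)); [apply lc_ext; auto|exact Hlc]. }
      rewrite <- Hc by auto. rewrite Forall_nth in HF. apply HF. rewrite Hcl; lia.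
  - intros [P [Hinj [Hin Hai]]]. exists (map P (seq 0 m)).
    assert (Hl : length (map P (seq 0 m)) = m) by (rewrite length_map, length_seq; auto).
    split; [auto|split; [|split]].
    + apply (NoDup_nth _ vzero). rewrite Hl. intros i j Hi Hj.
      rewrite !nth_map_seq by auto. apply Hinj; auto.
    + apply Forall_forall. intros x Hx. apply in_map_iff in Hx.
      destruct Hx as [t [<- Ht]]. apply in_seq in Ht. apply Hin. lia.
    + intros cs Hlen Hs Hlcb. apply Forall_nth. intros i d Hi.
      rewrite nth_indep with (d' := 0) by auto.
      rewrite Hlen, Hl in Hi.
      apply (Hai (fun t => nth t cs 0)); auto.
      * rewrite sumR_sm in Hs. rewrite Hlen, Hl in Hs. auto.
      * rewrite lincomb_lc in Hlcb by auto. rewrite Hl in Hlcb. rewrite <- Hlcb.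
        apply lc_ext; auto. intros t Ht. rewrite nth_map_seq; auto.
Qed.

Lemma HAS_pred {n} (A : vset n) m : HAS A (S m) -> HAS A m.
Proof.
  intros [P [Hinj [Hin Hai]]]. exists P. split; [|split].
  - intros a b Ha Hb. apply Hinj; lia.
  - intros; apply Hin; lia.
  - intros w Hw Hl t Ht.
    set (w' := fun t => if lt_dec t m then w t else 0).
    assert (Hw' : forall t, (t < m)%nat -> w' t = w t).
    { intros; unfold w'; destruct (lt_dec t0 m); [auto|lia]. }
    rewrite <- Hw' by auto. apply Hai; [| |lia].
    + simpl. rewrite (sm_ext m w' w) by auto. unfold w'. destruct (lt_dec m m); [lia|]. lra.
    + rewrite lc_S. rewrite (lc_ext m w' w P P) by auto. rewrite Hl.
      apply functional_extensionality; intro o. unfold vadd, vscale, vzero, w'.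
      destruct (lt_dec m m); [lia|]. ring.
Qed.

Lemma HAS_le {n} (A : vset n) j k : (j <= k)%nat -> HAS A k -> HAS A j.
Proof.
  intros H. induction H; auto. intros Hs. apply IHle. apply HAS_pred; auto.
Qed.

Lemma HAS_uniq {n} (A : vset n) a b : HAS A a -> ~ HAS A (S a) -> HAS A b -> ~ HAS A (S b) -> a = b.
Proof.
  intros Ha Ha' Hb Hb'. destruct (Nat.lt_total a b) as [H|[H|H]]; auto.
  - exfalso. apply Ha'. apply (HAS_le _ _ b); auto.
  - exfalso. apply Hb'. apply (HAS_le _ _ a); auto.
Qed.

Lemma HAS_sub {n} (A A' : vset n) m : (forall x, A x -> A' x) -> HAS A m -> HAS A' m.
Proof. intros H [P [H1 [H2 H3]]]. exists P; split; [|split]; auto. Qed.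

Definition ext {n} (P : nat -> Vec n) m (y : Vec n) : nat -> Vec n :=
  fun t => if Nat.eq_dec t m then y else P t.

Lemma ext_lt {n} (P : nat -> Vec n) m y t : (t < m)%nat -> ext P m y t = P t.
Proof. intros; unfold ext; destruct (Nat.eq_dec t m); [lia|auto]. Qed.

Lemma ext_m {n} (P : nat -> Vec n) m y : ext P m y m = y.
Proof. unfold ext; destruct (Nat.eq_dec m m); [auto|lia]. Qed.

Lemma ext_inj {n} (P : nat -> Vec n) m y : inj_on m P -> (forall t, (t < m)%nat -> P t <> y) ->
  inj_on (S m) (ext P m y).
Proof.
  intros Hi Hy a b Ha Hb. unfold ext.
  destruct (Nat.eq_dec a m), (Nat.eq_dec b m); subst; auto.
  - intros H. exfalso. apply (Hy b); [lia|auto].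
  - intros H. exfalso. apply (Hy a); [lia|auto].
  - apply Hi; lia.
Qed.

Lemma lc_ext_S {n} m w (P : nat -> Vec n) y o :
  lc (S m) w (ext P m y) o = lc m w P o + w m * y o.
Proof.
  rewrite lc_S. unfold vadd, vscale. rewrite ext_m.
  rewrite (lc_ext m w w (ext P m y) P); auto. intros; apply ext_lt; auto.
Qed.

Lemma affcomb {n} (A : vset n) m P y : AI m P -> inj_on m P -> (forall t, (t < m)%nat -> A (P t)) ->
  A y -> ~ HAS A (S m) -> exists al, sm m al = 1 /\ y = lc m al P.
Proof.
  intros Hai Hinj Hin Hy Hno.
  destruct (classic (exists t, (t < m)%nat /\ P t = y)) as [[t0 [Ht0 Hty]]|Hne].
  - exists (fun t => if Nat.eq_dec t t0 then 1 else 0). split; [apply sm_ind; auto|].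
    apply functional_extensionality; intro o. unfold lc.
    rewrite (sm_ext _ _ (fun t => if Nat.eq_dec t t0 then y o else 0)).
    + rewrite sm_ind; auto.
    + intros t Ht. destruct (Nat.eq_dec t t0); subst; ring.
  - assert (HnAI : ~ AI (S m) (ext P m y)).
    { intros HA. apply Hno. exists (ext P m y). split; [|split]; auto.
      - apply ext_inj; auto. intros t Ht He. apply Hne. eauto.
      - intros t Ht. unfold ext. destruct (Nat.eq_dec t m); auto. apply Hin; lia. }
    unfold AI in HnAI.
    apply not_all_ex_not in HnAI. destruct HnAI as [w Hw].
    apply imply_to_and in Hw. destruct Hw as [Hs Hw].
    apply imply_to_and in Hw. destruct Hw as [Hl Hw].
    apply not_all_ex_not in Hw. destruct Hw as [t1 Ht1].
    apply imply_to_and in Ht1. destruct Ht1 as [Ht1 Hwt1].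
    simpl in Hs.
    assert (Hpt : forall o, lc m w P o + w m * y o = 0).
    { intros o. rewrite <- lc_ext_S. rewrite Hl. reflexivity. }
    destruct (Req_dec (w m) 0) as [Hwm|Hwm].
    + exfalso. apply Hwt1.
      assert (Hz : lc m w P = vzero).
      { apply functional_extensionality; intro o. specialize (Hpt o). rewrite Hwm in Hpt.
        unfold vzero. lra. }
      destruct (Nat.eq_dec t1 m) as [->|Hne1]; auto.
      apply Hai; auto; [lra|lia].
    + exists (fun t => (- / w m) * w t). split.
      * rewrite sm_scale. replace (sm m w) with (- w m) by lra. field; auto.
      * apply functional_extensionality; intro o. unfold lc.
        rewrite (sm_ext _ _ (fun t => (- / w m) * (w t * P t o))) by (intros; ring).
        rewrite sm_scale. specialize (Hpt o). unfold lc in Hpt.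
        replace (sm m (fun t => w t * P t o)) with (- (w m * y o)) by lra.
        field; auto.
Qed.

Lemma sep_AI {n} m (P : nat -> Vec n) psi c0 z : linear_functional psi -> AI m P ->
  (forall t, (t < m)%nat -> psi (P t) = c0) -> psi z < c0 -> AI (S m) (ext P m z).
Proof.
  intros Hlf Hai Hc Hz w Hs Hl.
  assert (Hpsi : psi (lc (S m) w (ext P m z)) = 0) by (rewrite Hl; apply lf_zero; auto).
  rewrite lf_lc in Hpsi by auto. simpl in Hpsi, Hs. rewrite ext_m in Hpsi.
  rewrite (sm_ext m _ (fun t => w t * c0)) in Hpsi
    by (intros; rewrite ext_lt, Hc by auto; reflexivity).
  rewrite sm_scale_r in Hpsi.
  assert (Hwm : w m = 0).
  { replace (sm m w) with (- w m) in Hpsi by lra.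
    assert (w m * (psi z - c0) = 0) by lra.
    apply Rmult_integral in H. destruct H; auto. lra. }
  intros t Ht. destruct (Nat.eq_dec t m) as [->|Hne]; auto.
  apply Hai; [lra| |lia].
  apply functional_extensionality; intro o.
  pose proof (lc_ext_S m w P z o) as E. rewrite Hl, Hwm in E. unfold vzero in *. lra.
Qed.

Lemma lf_aff {n} psi m al (P : nat -> Vec n) c0 : linear_functional psi -> sm m al = 1 ->
  (forall t, (t < m)%nat -> psi (P t) = c0) -> psi (lc m al P) = c0.
Proof.
  intros Hl Hs Hc. rewrite lf_lc by auto.
  rewrite (sm_ext m _ (fun t => al t * c0)) by (intros; rewrite Hc; auto).
  rewrite sm_scale_r, Hs. ring.
Qed.


Lemma mid_in_ball {n} (N : Vec n -> R) K (Pi Pj : nat -> Vec n) t0 (al : nat -> R) (r : Vec n) :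
  is_norm N -> (1 <= K)%nat -> (t0 < K)%nat ->
  (forall t, (t < K)%nat -> N (Pi t) <= 1) -> (forall t, (t < K)%nat -> N (Pj t) <= 1) ->
  sm (S K) al = 1 -> r = lc (S K) al (ext Pi K (Pj t0)) ->
  exists e, 0 < e /\ forall eps, 0 < eps -> eps <= e ->
    N (midpoint (vadd (vscale (1+eps) (lc K (fun _ => / INR K) Pi)) (vscale (-eps) r))
                (vadd (vscale (1+eps) (lc K (fun _ => / INR K) Pj)) (vscale (-eps) r))) <= 1.
Proof.
  intros HN HK Ht0 HPi HPj Hal Hr.
  set (Q := fun t => if (t <? K)%nat then Pi t else Pj (t - K)%nat).
  set (g := fun t => if (t <? K)%nat then al t else if Nat.eq_dec (t - K)%nat t0 then al K else 0).
  assert (QL : forall t, (t < K)%nat -> Q t = Pi t).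
  { intros t Ht; unfold Q; destruct (Nat.ltb_spec t K); [auto|lia]. }
  assert (QR : forall t, Q (K + t)%nat = Pj t).
  { intros t; unfold Q; destruct (Nat.ltb_spec (K+t) K); [lia|]. f_equal; lia. }
  assert (gL : forall t, (t < K)%nat -> g t = al t).
  { intros t Ht; unfold g; destruct (Nat.ltb_spec t K); [auto|lia]. }
  assert (gR : forall t, g (K + t)%nat = if Nat.eq_dec t t0 then al K else 0).
  { intros t; unfold g; destruct (Nat.ltb_spec (K+t) K); [lia|].
    replace (K + t - K)%nat with t by lia. reflexivity. }
  assert (Hro : forall o, r o = sm (K + K) (fun t => g t * Q t o)).
  { intros o. rewrite Hr, lc_ext_S, sm_split. f_equal.
    - unfold lc. apply sm_ext. intros t Ht. rewrite gL, QL; auto.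
    - rewrite (sm_ext _ _ (fun t => if Nat.eq_dec t t0 then al K * Pj t0 o else 0)).
      + rewrite sm_ind; auto.
      + intros t Ht. rewrite gR, QR. destruct (Nat.eq_dec t t0); subst; ring. }
  assert (Hg : sm (K + K) g = 1).
  { rewrite sm_split. rewrite (sm_ext K g al) by auto.
    rewrite (sm_ext K (fun t => g (K + t)%nat) (fun t => if Nat.eq_dec t t0 then al K else 0)) by (intros; apply gR).
    rewrite sm_ind by auto. rewrite <- Hal. reflexivity. }
  set (A := sm (K + K) (fun t => Rabs (g t))).
  assert (HA : 0 <= A).
  { unfold A. rewrite <- (sm_zero (K+K)). apply sm_le. intros; apply Rabs_pos. }
  assert (HgA : forall t, (t < K + K)%nat -> Rabs (g t) <= A).
  { intros t Ht. unfold A. apply (sm_elem_le _ (fun t => Rabs (g t))); auto. intros; apply Rabs_pos. }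
  assert (HKr : 1 <= INR K) by (apply (le_INR 1); auto).
  set (e := / (2 * INR K * (1 + A))).
  assert (He : 0 < e) by (unfold e; apply Rinv_0_lt_compat; nra).
  exists e. split; auto. intros eps Heps Hepse.
  set (w := fun t => (1 + eps) * / (2 * INR K) + (- eps) * g t).
  assert (HeA : eps * A <= / (2 * INR K)).
  { apply Rle_trans with (e * A). { apply Rmult_le_compat_r; auto. }
    unfold e. rewrite Rinv_mult. 
    assert (0 < / (2 * INR K)) by (apply Rinv_0_lt_compat; lra).
    assert (/ (1 + A) * A <= 1).
    { apply Rmult_le_reg_l with (1 + A); [lra|]. rewrite <- Rmult_assoc, Rinv_r by lra. lra. }
    replace (/ (2 * INR K) * / (1 + A) * A) with (/ (2 * INR K) * (/ (1 + A) * A)) by ring.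
    nra. }
  replace (midpoint _ _) with (lc (K + K) w Q).
  - apply conv_ball; auto.
    + intros t Ht. unfold w. assert (Rabs (g t) <= A) by auto.
      assert (g t <= Rabs (g t)) by apply Rle_abs.
      assert (0 < / (2 * INR K)) by (apply Rinv_0_lt_compat; lra).
      assert (eps * g t <= eps * A) by (apply Rmult_le_compat_l; lra). nra.
    + intros t Ht. destruct (Nat.lt_ge_cases t K) as [H|H].
      * rewrite QL; auto.
      * replace t with (K + (t - K))%nat by lia. rewrite QR. apply HPj. lia.
    + unfold w. rewrite sm_add, sm_const, sm_scale, Hg, plus_INR. field. lra.
  - apply functional_extensionality; intro o. unfold midpoint, vscale, vadd, lc. rewrite Hro.
    unfold w.
    rewrite (sm_ext _ _ (fun t => ((1 + eps) * / (2 * INR K)) * Q t o + (- eps) * (g t * Q t o)))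
      by (intros; ring).
    rewrite sm_add, sm_scale, sm_scale, sm_split.
    rewrite (sm_ext K (fun t => Q t o) (fun t => Pi t o)) by (intros; rewrite QL; auto).
    rewrite (sm_ext K (fun t => Q (K + t)%nat o) (fun t => Pj t o)) by (intros; rewrite QR; auto).
    rewrite !sm_scale. field. lra.
Qed.


Lemma fchoice {A B} (Q : A -> B -> Prop) : (forall a, exists b, Q a b) -> exists g, forall a, Q a (g a).
Proof.
  intros H. exists (fun a => proj1_sig (constructive_indefinite_description _ (H a))).
  intros a. exact (proj2_sig (constructive_indefinite_description _ (H a))).
Qed.

Lemma c_pos {n} (N : Vec n -> R) phi c (F : vset n) : is_norm N -> linear_functional phi ->
  (forall y, unit_ball N y -> phi y <= c) -> same_set F (fun x => unit_ball N x /\ phi x = c) ->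
  ~ same_set F (unit_ball N) -> 0 < c.
Proof.
  intros HN Hl Hle HF Hp.
  assert (0 <= c).
  { rewrite <- (lf_zero phi Hl). apply Hle. unfold unit_ball. rewrite norm_zero; auto; lra. }
  destruct (Req_dec c 0) as [Hc|Hc]; [|lra].
  exfalso. apply Hp. intros x. rewrite (HF x). split; [tauto|]. intros Hx. split; auto.
  assert (phi x <= c) by auto.
  assert (Hm : phi (vscale (-1) x) <= c).
  { apply Hle. unfold unit_ball in *. destruct HN as (_&_&H3&_). rewrite H3.
    replace (Rabs (-1)) with 1 by (rewrite Rabs_left; lra). lra. }
  destruct Hl as [_ Hs]. rewrite Hs in Hm. lra.
Qed.

Lemma norm_one {n} (N : Vec n -> R) phi c m : is_norm N -> linear_functional phi ->
  (forall y, unit_ball N y -> phi y <= c) -> 0 < c -> N m <= 1 -> phi m = c -> N m = 1.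
Proof.
  intros HN Hl Hle Hc Hm Hpm.
  destruct (Rlt_or_le (N m) 1) as [Hlt|]; [|lra]. exfalso.
  destruct HN as (H1 & H2 & H3 & H4).
  destruct (Req_dec (N m) 0) as [H0|H0].
  - apply H2 in H0. rewrite H0 in Hpm. rewrite lf_zero in Hpm; auto. lra.
  - assert (Hp : 0 < N m) by (pose proof (H1 m); lra).
    assert (Hq : phi (vscale (/ N m) m) <= c).
    { apply Hle. unfold unit_ball. rewrite H3. rewrite Rabs_pos_eq.
      - rewrite Rinv_l; lra.
      - left; apply Rinv_0_lt_compat; auto. }
    destruct Hl as [_ Hs]. rewrite Hs, Hpm in Hq.
    assert (1 < / N m). { rewrite <- Rinv_1. apply Rinv_lt_contravar; lra. }
    nra.
Qed.

Lemma facet_data {n} (F G : vset n) : facet_of F G -> exists K psi ci,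
  HAS F (S K) /\ ~ HAS F (S (S K)) /\ HAS G K /\ ~ HAS G (S K) /\ linear_functional psi /\
  (forall y, F y -> psi y <= ci) /\ same_set G (fun x => F x /\ psi x = ci).
Proof.
  intros [[psi [ci [Hl [Hle Hs]]]] [d [[k [Hd [Hk1 Hk2]]] [k' [Hd' [Hk1' Hk2']]]]]].
  assert (k = S k') by lia. subst k. exists k', psi, ci. rewrite <- !has_HAS. tauto.
Qed.

Lemma HAS1 {n} (A : vset n) y : A y -> HAS A 1.
Proof.
  intros Hy. exists (fun _ => y). split; [|split].
  - intros a b Ha Hb _. lia.
  - auto.
  - intros w Hw _ t Ht. simpl in Hw. assert (t = O) by lia. subst. lra.
Qed.

Fixpoint mn (m : nat) (g : nat -> R) : R :=
  match m with O => 1 | S m' => Rmin (mn m' g) (g m') end.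

Lemma mn_pos m g : (forall t, (t < m)%nat -> 0 < g t) -> 0 < mn m g.
Proof.
  induction m; simpl; intros H; [lra|].
  apply Rmin_glb_lt; [apply IHm; intros; apply H; lia|apply H; lia].
Qed.

Lemma mn_le m g t : (t < m)%nat -> mn m g <= g t.
Proof.
  induction m; simpl; intros H; [lia|].
  destruct (Nat.eq_dec t m) as [->|Hne]; [apply Rmin_r|].
  eapply Rle_trans; [apply Rmin_l|apply IHm; lia].
Qed.


Lemma construct {n} (N : Vec n -> R) (F : vset n) f :
  is_norm N -> proper_face_of (unit_ball N) F -> num_facets F f ->
  exists X : list (Vec n), NoDup X /\ length X = f /\ M_set N (fun x => In x X).
Proof.
  intros HN [[phi [c [Hphi [Hle HF]]]] Hprop] [l [Hlen [Hall [Hdist _]]]].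
  assert (Hc : 0 < c) by (eapply c_pos; eauto).
  set (G := fun i => nth i l (fun _ : Vec n => False)).
  assert (HfacG : forall i, (i < f)%nat -> facet_of F (G i)).
  { intros i Hi. rewrite Forall_forall in Hall. apply Hall. apply nth_In. lia. }
  assert (HFB : forall y, F y -> N y <= 1 /\ phi y = c) by (intros y; apply HF).
  destruct (Nat.eq_dec f 0) as [Hf0|Hf0].
  { exists []. split; [apply NoDup_nil|split; [simpl; lia|]]. split; intros x; simpl; tauto. }
  destruct (facet_data _ _ (HfacG O ltac:(lia))) as [K [_ [_ [HFK [HFK' _]]]]].
  assert (Hdat : forall i, exists x : ((Vec n -> R) * R) * (nat -> Vec n),
    (i < f)%nat -> linear_functional (fst (fst x)) /\ (forall y, F y -> fst (fst x) y <= snd (fst x)) /\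
      (forall y, G i y <-> F y /\ fst (fst x) y = snd (fst x)) /\
      inj_on K (snd x) /\ (forall t, (t < K)%nat -> G i (snd x t)) /\ AI K (snd x) /\ ~ HAS (G i) (S K)).
  { intros i. destruct (lt_dec i f) as [Hi|Hi].
    - destruct (facet_data _ _ (HfacG i Hi)) as [Ki [psi [ci [H1 [H2 [[P [H3 [H4 H5]]] [H6 [H7 [H8 H9]]]]]]]]].
      assert (Ki = K). { assert (S Ki = S K) by (eapply HAS_uniq; eauto). lia. }
      subst Ki. exists ((psi, ci), P). intros _. simpl. exact (conj H7 (conj H8 (conj H9 (conj H3 (conj H4 (conj H5 H6)))))).
    - exists ((fun _ => 0, 0), fun _ => vzero). intros; lia. }
  destruct (fchoice _ Hdat) as [dat Hd].
  set (psi := fun i => fst (fst (dat i))). set (ci := fun i => snd (fst (dat i))).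
  set (P := fun i => snd (dat i)).
  assert (Hpsi : forall i, (i < f)%nat -> linear_functional (psi i)) by (intros; apply Hd; auto).
  assert (HGi : forall i y, (i < f)%nat -> G i y <-> F y /\ psi i y = ci i) by (intros; apply Hd; auto).
  assert (Hle_i : forall i y, (i < f)%nat -> F y -> psi i y <= ci i) by (intros; apply Hd; auto).
  assert (Hinj : forall i, (i < f)%nat -> inj_on K (P i)) by (intros; apply Hd; auto).
  assert (HPG : forall i t, (i < f)%nat -> (t < K)%nat -> G i (P i t)) by (intros; apply Hd; auto).
  assert (HAI : forall i, (i < f)%nat -> AI K (P i)) by (intros; apply Hd; auto).
  assert (HnG : forall i, (i < f)%nat -> ~ HAS (G i) (S K)) by (intros; apply Hd; auto).
  assert (HPF : forall i t, (i < f)%nat -> (t < K)%nat -> F (P i t) /\ psi i (P i t) = ci i)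
    by (intros; apply HGi; auto).
  clearbody psi ci P. clear Hd Hdat.
  destruct (Nat.eq_dec f 1) as [Hf1|Hf1].
  { destruct HFK as [Q [_ [HQ _]]]. destruct (HFB (Q O) (HQ O ltac:(lia))) as [HQ1 HQ2].
    set (y := Q O) in *.
    assert (Hy0 : 0 < N y).
    { destruct HN as (H1&H2&_). destruct (H1 y) as [|H0]; auto. symmetry in H0. apply H2 in H0.
      rewrite H0 in HQ2. rewrite lf_zero in HQ2; auto; lra. }
    set (x := vscale (2 / N y) y).
    assert (Hx : N x = 2).
    { unfold x. destruct HN as (_&_&H3&_). rewrite H3. rewrite Rabs_pos_eq.
      - field; lra.
      - apply Rlt_le. unfold Rdiv. apply Rmult_lt_0_compat; [lra|apply Rinv_0_lt_compat; lra]. }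
    exists [x]. split; [repeat constructor; simpl; tauto|split; [simpl; lia|split]].
    - intros a b Ha Hb Hab. simpl in Ha, Hb. exfalso.
      destruct Ha as [<-|[]]; destruct Hb as [<-|[]]; auto.
    - intros a [<-|[]]. lra. }
  assert (HK : (1 <= K)%nat).
  { destruct K as [|K']; [|lia]. exfalso. apply (Hdist O 1%nat); try lia.
    intros y. split; intros Hy; exfalso; [apply (HnG O)|apply (HnG 1%nat)]; try lia;
      eapply HAS1; eauto. }
  assert (HfR : 1 <= INR f) by (apply (le_INR 1); lia).
  assert (HKr : 1 <= INR K) by (apply (le_INR 1); auto).
  assert (Hsep : forall i j, (i < f)%nat -> (j < f)%nat -> i <> j ->
    exists t, (t < K)%nat /\ psi j (P i t) < ci j).
  { intros i j Hi Hj Hij. apply NNPP. intros Hno.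
    assert (Hall' : forall t, (t < K)%nat -> psi j (P i t) = ci j).
    { intros t Ht. destruct (HPF i t Hi Ht) as [HFt _]. pose proof (Hle_i j _ Hj HFt) as H.
      destruct (Rle_lt_or_eq_dec _ _ H) as [Hl|He]; auto. exfalso. apply Hno. eauto. }
    assert (Hsub : forall y, G i y -> G j y).
    { intros y Hy.
      destruct (affcomb (G i) K (P i) y (HAI i Hi) (Hinj i Hi) (fun t Ht => HPG i t Hi Ht) Hy (HnG i Hi))
        as [al [Hal Hyal]].
      apply HGi; auto. split; [apply (HGi i y Hi) in Hy; tauto|]. rewrite Hyal. apply lf_aff; auto. }
    destruct (classic (exists z, G j z /\ ~ G i z)) as [[z [Hzj Hzi]]|Hnz].
    - apply (HnG j Hj). exists (ext (P i) K z). split; [|split].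
      + apply ext_inj; auto. intros t Ht He. apply Hzi. rewrite <- He. apply HPG; auto.
      + intros t Ht. destruct (Nat.eq_dec t K) as [->|Hne].
        * rewrite ext_m; auto.
        * rewrite ext_lt by lia. apply Hsub, HPG; auto; lia.
      + apply sep_AI with (psi := psi i) (c0 := ci i); auto.
        * intros; apply HPF; auto.
        * apply (HGi j z Hj) in Hzj. destruct Hzj as [HzF _]. pose proof (Hle_i i z Hi HzF) as H.
          destruct (Rle_lt_or_eq_dec _ _ H) as [Hl|He]; auto. exfalso. apply Hzi. apply HGi; auto.
    - apply (Hdist i j Hi Hj Hij). intros y. split; [apply Hsub|]. intros Hy. apply NNPP. intros Hn.
      apply Hnz. eauto. }
  assert (Hrr : forall i, exists y, (i < f)%nat -> F y /\ psi i y < ci i).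
  { intros i. destruct (lt_dec i f) as [Hi|Hi]; [|exists vzero; lia].
    apply NNPP; intros Hno. apply (HnG i Hi). apply HAS_sub with (A := F); auto.
    intros y Hy. apply HGi; auto. split; auto. pose proof (Hle_i i y Hi Hy) as H.
    destruct (Rle_lt_or_eq_dec _ _ H) as [Hl|He]; auto. exfalso. apply Hno. exists y; auto. }
  destruct (fchoice _ Hrr) as [rr Hrr'].
  set (r := lc f (fun _ => / INR f) rr).
  assert (HrF : F r).
  { apply HF. split.
    - apply conv_ball; auto.
      + intros; left; apply Rinv_0_lt_compat; lra.
      + intros t Ht; apply HFB, Hrr'; auto.
      + rewrite sm_const; field; lra.
    - apply lf_aff; auto.
      + rewrite sm_const; field; lra.
      + intros t Ht; apply HFB, Hrr'; auto. }
  assert (Hpr : forall i, (i < f)%nat -> psi i r < ci i).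
  { intros i Hi. unfold r. rewrite lf_lc by auto.
    apply Rlt_le_trans with (sm f (fun _ => / INR f * ci i)).
    - apply sm_lt with i; auto.
      + intros t Ht. apply Rmult_le_compat_l; [left; apply Rinv_0_lt_compat; lra|].
        apply Hle_i; auto; apply Hrr'; auto.
      + apply Rmult_lt_compat_l; [apply Rinv_0_lt_compat; lra|]. apply Hrr'; auto.
    - rewrite sm_const. right; field; lra. }
  set (q := fun i => lc K (fun _ => / INR K) (P i)).
  assert (Hsum : sm K (fun _ => / INR K) = 1) by (rewrite sm_const; field; lra).
  assert (HqF : forall i, (i < f)%nat -> F (q i)).
  { intros i Hi. apply HF. split.
    - apply conv_ball; auto.
      + intros; left; apply Rinv_0_lt_compat; lra.
      + intros t Ht; apply HFB, HPF; auto.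
    - apply lf_aff; auto. intros t Ht; apply HFB, HPF; auto. }
  assert (Hqi : forall i, (i < f)%nat -> psi i (q i) = ci i)
    by (intros; apply lf_aff; auto; intros; apply HPF; auto).
  assert (Hqj : forall i j, (i < f)%nat -> (j < f)%nat -> i <> j -> psi j (q i) < ci j).
  { intros i j Hi Hj Hij. destruct (Hsep i j Hi Hj Hij) as [t0 [Ht0 Hlt]]. unfold q.
    rewrite lf_lc by auto.
    apply Rlt_le_trans with (sm K (fun _ => / INR K * ci j)).
    - apply sm_lt with t0; auto.
      + intros t Ht. apply Rmult_le_compat_l; [left; apply Rinv_0_lt_compat; lra|].
        apply Hle_i; auto; apply HPF; auto.
      + apply Rmult_lt_compat_l; auto. apply Rinv_0_lt_compat; lra.
    - rewrite sm_const. right; field; lra. }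
  set (x := fun eps i => vadd (vscale (1 + eps) (q i)) (vscale (- eps) r)).
  assert (Hlfx : forall (th : Vec n -> R) eps i, linear_functional th ->
    th (x eps i) = (1 + eps) * th (q i) - eps * th r).
  { intros th eps i [Ha Hs]. unfold x. rewrite Ha, !Hs. ring. }
  assert (Hxout : forall eps i, 0 < eps -> (i < f)%nat -> 1 < N (x eps i)).
  { intros eps i He Hi. apply Rnot_le_lt. intros Hb.
    assert (HxF : F (x eps i)).
    { apply HF. split; auto. rewrite Hlfx by auto.
      rewrite (proj2 (HFB _ (HqF i Hi))), (proj2 (HFB _ HrF)). ring. }
    pose proof (Hle_i i _ Hi HxF) as H. rewrite Hlfx in H by auto. rewrite Hqi in H by auto.
    pose proof (Hpr i Hi). nra. }
  assert (Hxinj : forall eps i j, 0 < eps -> (i < f)%nat -> (j < f)%nat -> x eps i = x eps j -> i = j).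
  { intros eps i j He Hi Hj Hx. destruct (Nat.eq_dec i j) as [|Hij]; auto. exfalso.
    assert (Hq : q i = q j).
    { apply functional_extensionality; intro o.
      assert (E := f_equal (fun v => v o) Hx). unfold x, vadd, vscale in E. simpl in E.
      apply Rmult_eq_reg_l with (1 + eps); lra. }
    pose proof (Hqj i j Hi Hj Hij) as H. rewrite Hq, Hqi in H by auto. lra. }
  assert (Hpair : forall i j, exists e, 0 < e /\ ((i < f)%nat -> (j < f)%nat -> i <> j ->
    forall eps, 0 < eps -> eps <= e -> N (midpoint (x eps i) (x eps j)) <= 1)).
  { intros i j. destruct (classic ((i < f)%nat /\ (j < f)%nat /\ i <> j)) as [[Hi [Hj Hij]]|Hno].
    2: { exists 1; split; [lra|]. intros; exfalso; auto. }
    destruct (Hsep j i Hj Hi (not_eq_sym Hij)) as [t0 [Ht0 Hz]].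
    assert (HAI2 : AI (S K) (ext (P i) K (P j t0))).
    { apply sep_AI with (psi := psi i) (c0 := ci i); auto. intros; apply HPF; auto. }
    assert (Hin2 : inj_on (S K) (ext (P i) K (P j t0))).
    { apply ext_inj; auto. intros t Ht He. pose proof (proj2 (HPF i t Hi Ht)) as H.
      rewrite He in H. lra. }
    assert (HF2 : forall t, (t < S K)%nat -> F (ext (P i) K (P j t0) t)).
    { intros t Ht. destruct (Nat.eq_dec t K) as [->|Hne].
      * rewrite ext_m; apply HPF; auto.
      * rewrite ext_lt by lia. apply HPF; auto; lia. }
    destruct (affcomb F (S K) (ext (P i) K (P j t0)) r HAI2 Hin2 HF2 HrF HFK') as [al [Hal Hral]].
    assert (HPi : forall t, (t < K)%nat -> N (P i t) <= 1) by (intros t Ht; apply HFB, HPF; auto).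
    assert (HPj : forall t, (t < K)%nat -> N (P j t) <= 1) by (intros t Ht; apply HFB, HPF; auto).
    destruct (mid_in_ball N K (P i) (P j) t0 al r HN HK Ht0 HPi HPj Hal Hral) as [e [He He']].
    exists e. split; [exact He|]. intros _ _ _ eps H1 H2. apply He'; auto. }
  destruct (fchoice (fun (p : nat * nat) e => 0 < e /\ ((fst p < f)%nat -> (snd p < f)%nat ->
      fst p <> snd p -> forall eps, 0 < eps -> eps <= e ->
      N (midpoint (x eps (fst p)) (x eps (snd p))) <= 1))) as [E HE].
  { intros [i j]. apply Hpair. }
  set (eps := mn f (fun i => mn f (fun j => E (i, j)))).
  assert (Heps : 0 < eps).
  { apply mn_pos. intros; apply mn_pos. intros; apply HE. }
  assert (Hepsle : forall i j, (i < f)%nat -> (j < f)%nat -> eps <= E (i, j)).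
  { intros i j Hi Hj. eapply Rle_trans; [apply (mn_le f _ i); auto|]. cbv beta.
    apply (mn_le f (fun j => E (i, j)) j); auto. }
  exists (map (x eps) (seq 0 f)). split; [|split].
  - apply (NoDup_nth _ vzero). rewrite length_map, length_seq. intros a b Ha Hb.
    rewrite !nth_map_seq by auto. apply Hxinj; auto.
  - rewrite length_map, length_seq; auto.
  - split.
    + intros a b Ha Hb Hab. apply in_map_iff in Ha, Hb.
      destruct Ha as [i [<- Hi]]. destruct Hb as [j [<- Hj]]. apply in_seq in Hi, Hj.
      assert (Hij : i <> j) by (intros ->; auto).
      apply (norm_one N phi c); auto.
      * apply (proj2 (HE (i, j))); simpl; auto; try lia. apply Hepsle; lia.
      * unfold midpoint. pose proof Hphi as [Ha Hs]. rewrite Hs, Ha, !Hlfx by auto.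
        rewrite (proj2 (HFB _ (HqF i ltac:(lia)))), (proj2 (HFB _ (HqF j ltac:(lia)))),
          (proj2 (HFB _ HrF)). field.
    + intros a Ha. apply in_map_iff in Ha. destruct Ha as [i [<- Hi]]. apply in_seq in Hi.
      apply Hxout; auto; lia.
Qed.


Theorem mainTheorem17 (n : nat) (N : Vec n -> R) (f : nat) (v : option nat) :
  is_norm N ->
  is_polytope (unit_ball N) ->
  max_facets_proper_face (unit_ball N) f ->
  m_value N v ->
  enat_ge v f.
Proof.
  intros HN _ [[F [HFp HFn]] _] Hm.
  destruct v as [k|]; [|exact I]. unfold m_value, enat_ge in *. destruct Hm as [_ Hcov].
  destruct (construct N F f HN HFp HFn) as [X [Hnd [Hlen HM]]].
  destruct (Hcov _ HM) as [l [Hl Hin]]. rewrite <- Hlen. eapply Nat.le_trans; [|exact Hl].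
  apply NoDup_incl_length; [exact Hnd|]. intros y Hy. apply Hin. exact Hy.
Qed.
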